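(* Let $H$ be a standard finitary set functor with a presentation $\varepsilon\colon H_\Sigma\to H$, and let $Y$ be a set. Then the relation $\sim^*_Y$ restricted to $C_\Sigma Y$ is a congruence of $\Sigma$-algebras, the quotient $\Sigma$-algebra $C_\Sigma Y/\mathord{\sim^*_Y}$ satisfies all $\varepsilon$-equations, and with the induced $H$-algebra structure and the map $y\mapsto[y]$ it is a free corecursive $H$-algebra on $Y$: $CY\cong C_\Sigma Y/\mathord{\sim^*_Y}$.
   Context: Finitary set functor: $HX=\bigcup HY$ over finite $Y\subseteq X$. Standard: preserves inclusions and finite intersections. $H_\Sigma X=\coprod_n\Sigma_n\times X^n$ for a finitary signature $\Sigma$; a presentation is a natural transformation $\varepsilon\colon H_\Sigma\to H$ with surjective components. An $\varepsilon$-equation is $\sigma(x_1,\dots,x_n)=\tau(z_1,\dots,z_m)$ ($\sigma\in\Sigma_n,\tau\in\Sigma_m$, variables not necessarily distinct) such that $\varepsilon_X$ identifies both sides for $X=\{x_1,\dots,z_m\}$. A $\Sigma$-algebra $b\colon H_\Sigma B\to B$ satisfying all $\varepsilon$-equations is of the form $b=a\cdot\varepsilon_B$ for a unique $H$-algebra $a\colon HB\to B$ (the induced $H$-algebra structure). A $\Sigma$-tree over $Y$ is a rooted ordered (possibly infinite) tree whose nodes with $n>0$ children are labeled by symbols of $\Sigma_n$ and whose leaves are labeled by constants in $\Sigma_0$ or elements of $Y$; $T_\Sigma Y$ is the $\Sigma$-algebra of all of them (operations by tree-tupling), $F_\Sigma Y$ the subalgebra of finite ones, and $C_\Sigma Y$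 the subalgebra of those with only finitely many leaves labeled in $Y$. For a set $Z$, $\sim_Z$ is the smallest congruence on $F_\Sigma Z$ containing all pairs obtained from an $\varepsilon$-equation $\sigma(x_1,\dots,x_n)=\tau(z_1,\dots,z_m)$ by substituting finite $\Sigma$-trees over $Z$ for its variables. For a tree $t$ and $k<\omega$, $\partial_kt$ is the finite tree over $Y\cup\{\bot\}$ ($\bot\notin Y$) obtained by deleting all nodes of depth $>k$ and relabeling all nodes of depth $k$ by $\bot$. For $t,s\in T_\Sigma Y$: $t\sim^*_Ys$ iff $\partial_kt\sim_{Y\cup\{\bot\}}\partial_ks$ for all $k<\omega$. An $H$-algebra $a\colon HA\to A$ is corecursive if every coalgebra $e\colon X\to HX$ admits a unique $s$ with $s=a\cdot Hs\cdot e$; a free corecursive algebra $CY$ on $Y$ is a corecursive algebra with a map $Y\to CY$ through which every map from $Y$ to a corecursive algebra factors uniquely via an $H$-algebra morphism. *)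

(* Defs.v *)
(* Sets are modelled by Types, subsets by predicates. *)
From Stdlib Require Import List Arith Fin.
Import ListNotations.

Definition injective {A B : Type} (f : A -> B) : Prop :=
  forall x y, f x = f y -> x = y.

Definition surjective {A B : Type} (f : A -> B) : Prop :=
  forall y, exists x, f x = y.

Definition is_functor (H : Type -> Type)
  (map : forall X Z : Type, (X -> Z) -> H X -> H Z) : Prop :=
  (forall X (u : H X), map X X (fun x => x) u = u) /\
  (forall X Z W (f : X -> Z) (g : Z -> W) (u : H X),
      map X W (fun x => g (f x)) u = map Z W g (map X Z f u)).

(* finitary: every element of HX lies in HY for some finite Y ⊆ X
   (Y = the elements listed in l, included via the projection) *)
Definition finitary (H : Type -> Type)
  (map : forall X Z : Type, (X -> Z) -> H X -> H Z) : Prop :=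
  forall X (u : H X), exists (l : list X) (v : H {x : X | In x l}),
    map _ X (@proj1_sig X (fun x => In x l)) v = u.

(* standard: preserves inclusions (= injections, including those with
   empty domain) and finite intersections (pullbacks of injections) *)
Definition standard (H : Type -> Type)
  (map : forall X Z : Type, (X -> Z) -> H X -> H Z) : Prop :=
  (forall A X (f : A -> X), injective f -> injective (map A X f)) /\
  (forall A B X (f : A -> X) (g : B -> X), injective f -> injective g ->
     forall (a : H A) (b : H B), map A X f a = map B X g b ->
     exists c : H {p : A * B | f (fst p) = g (snd p)},
       map _ A (fun p => fst (proj1_sig p)) c = a /\
       map _ B (fun p => snd (proj1_sig p)) c = b).

(* a finitary signature: Sig n = set of n-ary operation symbols *)
Definition HSig (Sig : nat -> Type) (X : Type) : Type :=
  {n : nat & (Sig n * (Fin.t n -> X))%type}.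

Definition HSig_map (Sig : nat -> Type) {X Z : Type} (f : X -> Z)
  (u : HSig Sig X) : HSig Sig Z :=
  match u with existT _ n (s, xs) => existT _ n (s, fun i => f (xs i)) end.

Definition presentation (Sig : nat -> Type) (H : Type -> Type)
  (map : forall X Z : Type, (X -> Z) -> H X -> H Z)
  (eps : forall X, HSig Sig X -> H X) : Prop :=
  (forall X Z (f : X -> Z) (u : HSig Sig X),
      eps Z (HSig_map Sig f u) = map X Z f (eps X u)) /\
  (forall X, surjective (eps X)).

Definition occurs (Sig : nat -> Type) {V : Type} (v : V) (u : HSig Sig V) : Prop :=
  match u with existT _ n (_, xs) => exists i, xs i = v end.

Definition eps_equation (Sig : nat -> Type) (H : Type -> Type)
  (eps : forall X, HSig Sig X -> H X) (V : Type) (l r : HSig Sig V) : Prop :=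
  eps V l = eps V r /\ (forall v : V, occurs Sig v l \/ occurs Sig v r).

Definition satisfies_eps_equations (Sig : nat -> Type) (H : Type -> Type)
  (eps : forall X, HSig Sig X -> H X) (B : Type) (b : HSig Sig B -> B) : Prop :=
  forall (V : Type) (l r : HSig Sig V), eps_equation Sig H eps V l r ->
    forall v : V -> B, b (HSig_map Sig v l) = b (HSig_map Sig v r).

Inductive ftree (Sig : nat -> Type) (Z : Type) : Type :=
| fleaf : Z -> ftree Sig Z
| fnode : forall n, Sig n -> (Fin.t n -> ftree Sig Z) -> ftree Sig Z.
Arguments fleaf {Sig Z} _.
Arguments fnode {Sig Z} n _ _.

Definition fsubst (Sig : nat -> Type) {V Z : Type} (th : V -> ftree Sig Z)
  (u : HSig Sig V) : ftree Sig Z :=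
  match u with existT _ n (s, xs) => fnode n s (fun i => th (xs i)) end.

Inductive simZ (Sig : nat -> Type) (H : Type -> Type)
  (eps : forall X, HSig Sig X -> H X) (Z : Type) :
  ftree Sig Z -> ftree Sig Z -> Prop :=
| simZ_ax : forall (V : Type) (l r : HSig Sig V) (th : V -> ftree Sig Z),
    eps_equation Sig H eps V l r ->
    simZ Sig H eps Z (fsubst Sig th l) (fsubst Sig th r)
| simZ_refl : forall t, simZ Sig H eps Z t t
| simZ_sym : forall t s, simZ Sig H eps Z t s -> simZ Sig H eps Z s t
| simZ_trans : forall t s w,
    simZ Sig H eps Z t s -> simZ Sig H eps Z s w -> simZ Sig H eps Z t w
| simZ_cong : forall n (o : Sig n) (ts ss : Fin.t n -> ftree Sig Z),
    (forall i, simZ Sig H eps Z (ts i) (ss i)) ->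
    simZ Sig H eps Z (fnode n o ts) (fnode n o ss).

Definition label (Sig : nat -> Type) (Y : Type) : Type :=
  (Y + {n : nat & Sig n})%type.

(* a labelled tree as a partial map from positions (paths of child
   indices) to labels *)
Definition rawtree (Sig : nat -> Type) (Y : Type) : Type :=
  list nat -> option (label Sig Y).

Definition wf_tree (Sig : nat -> Type) {Y : Type} (t : rawtree Sig Y) : Prop :=
  t [] <> None /\
  forall p, match t p with
            | None => forall i, t (p ++ [i]) = None
            | Some (inl _) => forall i, t (p ++ [i]) = None
            | Some (inr (existT _ n _)) =>
                forall i, t (p ++ [i]) <> None <-> i < n
            end.

Definition in_T (Sig : nat -> Type) {Y : Type} (t : rawtree Sig Y) : Prop :=
  wf_tree Sig t.

Definition in_C (Sig : nat -> Type) {Y : Type} (t : rawtree Sig Y) : Prop :=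
  wf_tree Sig t /\
  exists L : list (list nat), forall p y, t p = Some (inl y) -> In p L.

Definition tnode (Sig : nat -> Type) {Y : Type} (n : nat) (o : Sig n)
  (ts : Fin.t n -> rawtree Sig Y) : rawtree Sig Y :=
  fun p => match p with
           | [] => Some (inr (existT _ n o))
           | i :: p' => match lt_dec i n with
                        | left h => ts (Fin.of_nat_lt h) p'
                        | right _ => None
                        end
           end.

Definition tleaf (Sig : nat -> Type) {Y : Type} (y : Y) : rawtree Sig Y :=
  fun p => match p with [] => Some (inl y) | _ => None end.

(* cut of the subtree at position p: nodes of relative depth > k deleted,
   those of relative depth k relabelled by bottom (= None) *)
Fixpoint cut_at (Sig : nat -> Type) {Y : Type} (k : nat) (t : rawtree Sig Y)
  (p : list nat) : ftree Sig (option Y) :=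
  match k with
  | 0 => fleaf None
  | S k' => match t p with
            | Some (inl y) => fleaf (Some y)
            | Some (inr (existT _ n o)) =>
                fnode n o (fun i => cut_at Sig k' t (p ++ [proj1_sig (Fin.to_nat i)]))
            | None => fleaf None
            end
  end.

Definition cut (Sig : nat -> Type) {Y : Type} (k : nat) (t : rawtree Sig Y) :
  ftree Sig (option Y) := cut_at Sig k t [].

Definition sim_star (Sig : nat -> Type) (H : Type -> Type)
  (eps : forall X, HSig Sig X -> H X) (Y : Type) (t s : rawtree Sig Y) : Prop :=
  forall k, simZ Sig H eps (option Y) (cut Sig k t) (cut Sig k s).

Definition congruence_on_C (Sig : nat -> Type) (Y : Type)
  (R : rawtree Sig Y -> rawtree Sig Y -> Prop) : Prop :=
  (forall t, in_C Sig t -> R t t) /\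
  (forall t s, in_C Sig t -> in_C Sig s -> R t s -> R s t) /\
  (forall t s w, in_C Sig t -> in_C Sig s -> in_C Sig w ->
     R t s -> R s w -> R t w) /\
  (forall n (o : Sig n) (ts ss : Fin.t n -> rawtree Sig Y),
     (forall i, in_C Sig (ts i) /\ in_C Sig (ss i) /\ R (ts i) (ss i)) ->
     R (tnode Sig n o ts) (tnode Sig n o ss)).

Definition corecursive (H : Type -> Type)
  (map : forall X Z : Type, (X -> Z) -> H X -> H Z)
  (A : Type) (a : H A -> A) : Prop :=
  forall (X : Type) (e : X -> H X),
    exists s : X -> A,
      (forall x, s x = a (map X A s (e x))) /\
      (forall s' : X -> A, (forall x, s' x = a (map X A s' (e x))) ->
         forall x, s' x = s x).

Definition alg_morphism (H : Type -> Type)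
  (map : forall X Z : Type, (X -> Z) -> H X -> H Z)
  (A : Type) (a : H A -> A) (B : Type) (b : H B -> B) (h : A -> B) : Prop :=
  forall u : H A, h (a u) = b (map A B h u).

Definition free_corecursive (H : Type -> Type)
  (map : forall X Z : Type, (X -> Z) -> H X -> H Z)
  (A : Type) (a : H A -> A) (Y : Type) (eta : Y -> A) : Prop :=
  corecursive H map A a /\
  forall (B : Type) (b : H B -> B), corecursive H map B b ->
    forall f : Y -> B,
      exists h : A -> B,
        (alg_morphism H map A a B b h /\ forall y, h (eta y) = f y) /\
        (forall h' : A -> B,
           alg_morphism H map A a B b h' -> (forall y, h' (eta y) = f y) ->
           forall x, h' x = h x).

(* Main.v *)
Require Import Defs.
From Stdlib Require Import List Arith Fin Lia.
From Stdlib Require Import ClassicalEpsilon ProofIrrelevance FunctionalExtensionality PropExtensionality Classical.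
Import ListNotations.

Section Trees.
Context (Sig : nat -> Type) (Y : Type).

Definition child (t : rawtree Sig Y) (i : nat) : rawtree Sig Y := fun p => t (i :: p).

Lemma wf_none_ext (t : rawtree Sig Y) : wf_tree Sig t ->
  forall p p', t p = None -> t (p ++ p') = None.
Proof.
  intros [_ W] p p'. revert p. induction p' as [|j p' IH] using rev_ind; intros p Hp.
  - rewrite app_nil_r; exact Hp.
  - rewrite app_assoc. specialize (IH p Hp). specialize (W (p ++ p')). rewrite IH in W. apply W.
Qed.

Lemma cut_at_cons k (t : rawtree Sig Y) i p :
  cut_at Sig k t (i :: p) = cut_at Sig k (child t i) p.
Proof.
  revert p; induction k as [|k IH]; intros p; simpl; auto.
  unfold child at 1. destruct (t (i :: p)) as [[y|[n o]]|]; auto.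
  f_equal. apply functional_extensionality; intros j. rewrite <- IH. reflexivity.
Qed.

Lemma child_tnode n o (ts : Fin.t n -> rawtree Sig Y) (i : Fin.t n) :
  child (tnode Sig n o ts) (proj1_sig (Fin.to_nat i)) = ts i.
Proof.
  apply functional_extensionality; intros p. unfold child, tnode.
  destruct (lt_dec (proj1_sig (Fin.to_nat i)) n) as [h|h].
  - f_equal. rewrite <- (Fin.of_nat_to_nat_inv i) at 2. apply Fin.of_nat_ext.
  - exfalso; apply h; exact (proj2_sig (Fin.to_nat i)).
Qed.

Lemma cut_tnode k n o (ts : Fin.t n -> rawtree Sig Y) :
  cut Sig (S k) (tnode Sig n o ts) = fnode n o (fun i => cut Sig k (ts i)).
Proof.
  unfold cut; simpl. f_equal. apply functional_extensionality; intros i.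
  rewrite cut_at_cons, child_tnode. reflexivity.
Qed.

Lemma tnode_child (t : rawtree Sig Y) n o : wf_tree Sig t ->
  t [] = Some (inr (existT _ n o)) ->
  t = tnode Sig n o (fun i => child t (proj1_sig (Fin.to_nat i))).
Proof.
  intros Wt Ht. apply functional_extensionality; intros p. destruct p as [|j p]; simpl; auto.
  destruct (lt_dec j n) as [h|h].
  - unfold child. rewrite Fin.to_nat_of_nat. reflexivity.
  - assert (E : t [j] = None).
    { destruct Wt as [_ W]. specialize (W []). rewrite Ht in W. simpl in W.
      destruct (t [j]) eqn:E; auto. exfalso; apply h. apply W. rewrite E; discriminate. }
    apply (wf_none_ext t Wt [j] p E).
Qed.

Definition bounded (k : nat) (t : rawtree Sig Y) : Prop :=
  forall p y, t p = Some (inl y) -> length p < k.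

Lemma child_wf (t : rawtree Sig Y) n o i : wf_tree Sig t ->
  t [] = Some (inr (existT _ n o)) -> i < n -> wf_tree Sig (child t i).
Proof.
  intros [W0 W] Ht hi. split.
  - unfold child. specialize (W []). rewrite Ht in W. apply W. exact hi.
  - intros p. unfold child. specialize (W (i :: p)). exact W.
Qed.

Lemma child_in_C (t : rawtree Sig Y) n o i : in_C Sig t ->
  t [] = Some (inr (existT _ n o)) -> i < n -> in_C Sig (child t i).
Proof.
  intros [Wt [L HL]] Ht hi. split. eapply child_wf; eauto.
  exists (List.map (@tl nat) L). intros p y Hp. apply HL in Hp.
  change p with (tl (i :: p)). apply in_map. exact Hp.
Qed.

Lemma child_bounded k (t : rawtree Sig Y) i : bounded (S k) t -> bounded k (child t i).
Proof. intros B p y Hp. apply B in Hp. simpl in Hp. lia. Qed.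

Lemma tnode_wf n o (ts : Fin.t n -> rawtree Sig Y) :
  (forall i, wf_tree Sig (ts i)) -> wf_tree Sig (tnode Sig n o ts).
Proof.
  intros Wts. split. simpl; discriminate.
  intros [|j p].
  - simpl. intros i. destruct (lt_dec i n) as [h|h]; split; intros; auto.
    + apply (Wts (Fin.of_nat_lt h)).
    + contradiction.
  - simpl. destruct (lt_dec j n) as [h|h].
    + apply (Wts (Fin.of_nat_lt h)).
    + intros; reflexivity.
Qed.

Lemma fin_list_choice n (P : Fin.t n -> list (list nat) -> Prop) :
  (forall i, exists L, P i L) ->
  exists L : list (list nat), forall j (h : j < n) p, 
   (forall L', P (Fin.of_nat_lt h) L' -> In p L') -> In (j :: p) L.
Abort.

Lemma tnode_in_C n o (ts : Fin.t n -> rawtree Sig Y) :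
  (forall i, in_C Sig (ts i)) -> in_C Sig (tnode Sig n o ts).
Proof.
  intros HC. split. apply tnode_wf. intros i; apply HC.
  assert (F : forall i, {L : list (list nat) | forall p y, ts i p = Some (inl y) -> In p L}).
  { intros i. apply constructive_indefinite_description. apply HC. }
  exists (flat_map (fun j => match lt_dec j n with
                             | left h => List.map (cons j) (proj1_sig (F (Fin.of_nat_lt h)))
                             | right _ => [] end) (seq 0 n)).
  intros [|j p] y Hp; simpl in Hp. discriminate.
  apply in_flat_map. exists j. split. apply in_seq.
  destruct (lt_dec j n) as [h|h]; [lia|discriminate].
  destruct (lt_dec j n) as [h|h]; [|discriminate].
  apply in_map. exact (proj2_sig (F (Fin.of_nat_lt h)) p y Hp).
Qed.

Lemma tnode_bounded k n o (ts : Fin.t n -> rawtree Sig Y) :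
  (forall i, bounded k (ts i)) -> bounded (S k) (tnode Sig n o ts).
Proof.
  intros B [|j p] y Hp; simpl in Hp. discriminate.
  destruct (lt_dec j n) as [h|h]; [|discriminate].
  apply B in Hp. simpl. lia.
Qed.

Lemma list_len_bound (L : list (list nat)) : exists M, forall p, In p L -> length p < M.
Proof.
  induction L as [|p0 L [M HM]]. exists 0; intros p [].
  exists (S (length p0) + M). intros p [E|E]. subst; lia. apply HM in E; lia.
Qed.

Lemma in_C_bounded (t : rawtree Sig Y) : in_C Sig t -> exists k, bounded k t.
Proof.
  intros [_ [L HL]]. destruct (list_len_bound L) as [M HM]. exists M.
  intros p y Hp. apply HM, (HL p y), Hp.
Qed.

End Trees.
Section SimZ.
Context (H : Type -> Type) (map : forall X Z : Type, (X -> Z) -> H X -> H Z)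
  (Sig : nat -> Type) (eps : forall X, HSig Sig X -> H X)
  (epsnat : forall X Z (f : X -> Z) (u : HSig Sig X),
      eps Z (HSig_map Sig f u) = map X Z f (eps X u)).

Section Z.
Context (Z : Type).

Definition shapeR {W : Type} (pi : ftree Sig Z -> W) (u v : ftree Sig Z) : Prop :=
  match u, v with
  | fleaf z, fleaf z' => z = z'
  | fnode n o us, fnode m o' vs =>
      eps W (existT _ n (o, fun i => pi (us i))) = eps W (existT _ m (o', fun i => pi (vs i)))
  | _, _ => False
  end.

Lemma simZ_shape {W : Type} (pi : ftree Sig Z -> W) :
  (forall u v, simZ Sig H eps Z u v -> pi u = pi v) ->
  forall u v, simZ Sig H eps Z u v -> shapeR pi u v.
Proof.
  intros Inv u v S. induction S as [V l r th E | t | t s _ IH | t s w _ IH1 _ IH2 | n o ts ss HS _].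
  - destruct l as [n [o xs]]; destruct r as [m [o' zs]]. simpl.
    change (existT (fun n0 : nat => (Sig n0 * (Fin.t n0 -> W))%type) n (o, fun i => pi (th (xs i))))
      with (HSig_map Sig (fun x => pi (th x)) (existT (fun n0 => (Sig n0 * (Fin.t n0 -> V))%type) n (o, xs))).
    change (existT (fun n0 : nat => (Sig n0 * (Fin.t n0 -> W))%type) m (o', fun i => pi (th (zs i))))
      with (HSig_map Sig (fun x => pi (th x)) (existT (fun n0 => (Sig n0 * (Fin.t n0 -> V))%type) m (o', zs))).
    rewrite !epsnat. f_equal. apply E.
  - destruct t; simpl; auto.
  - destruct t, s; simpl in *; auto.
  - destruct t, s, w; simpl in *; try contradiction; congruence.
  - simpl. f_equal. f_equal. f_equal. apply functional_extensionality; intros i. apply Inv, HS.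
Qed.

Lemma simZ_leaf z v : simZ Sig H eps Z (fleaf z) v -> v = fleaf z.
Proof.
  intros S. pose proof (simZ_shape (fun _ => tt) (fun _ _ _ => eq_refl) _ _ S) as R.
  destruct v; simpl in R; [congruence|contradiction].
Qed.

Context (bot : Z).
Fixpoint trunc (k : nat) (u : ftree Sig Z) : ftree Sig Z :=
  match k with
  | 0 => fleaf bot
  | S k' => match u with
            | fleaf z => fleaf z
            | fnode n o us => fnode n o (fun i => trunc k' (us i))
            end
  end.

Lemma simZ_trunc u v : simZ Sig H eps Z u v -> forall k, simZ Sig H eps Z (trunc k u) (trunc k v).
Proof.
  intros S. induction S as [V l r th E | t | t s _ IH | t s w _ IH1 _ IH2 | n o ts ss HS IH];
    intros k.
  - destruct k as [|k]. apply simZ_refl.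
    pose proof (simZ_ax Sig H eps Z V l r (fun x => trunc k (th x)) E) as A.
    destruct l as [n [o xs]]; destruct r as [m [o' zs]]. exact A.
  - apply simZ_refl.
  - apply simZ_sym, IH.
  - eapply simZ_trans; eauto.
  - destruct k as [|k]. apply simZ_refl. simpl. apply simZ_cong. intros i; apply IH.
Qed.
End Z.

Lemma trunc_cut (Y : Type) j k (t : rawtree Sig Y) p : j <= k ->
  trunc (option Y) None j (cut_at Sig k t p) = cut_at Sig j t p.
Proof.
  revert k p; induction j as [|j IH]; intros k p Hjk; simpl; auto.
  destruct k as [|k]; [lia|]. simpl. destruct (t p) as [[y|[n o]]|]; auto.
  f_equal. apply functional_extensionality; intros i. apply IH. lia.
Qed.

Lemma cut_mono (Y : Type) j k (t s : rawtree Sig Y) : j <= k ->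
  simZ Sig H eps (option Y) (cut Sig k t) (cut Sig k s) ->
  simZ Sig H eps (option Y) (cut Sig j t) (cut Sig j s).
Proof.
  intros Hjk S. unfold cut in *. rewrite <- (trunc_cut Y j k t [] Hjk), <- (trunc_cut Y j k s [] Hjk).
  apply simZ_trunc, S.
Qed.
End SimZ.
Lemma sig_inj {A : Type} (P : A -> Prop) (e1 e2 : {x : A | P x}) :
  proj1_sig e1 = proj1_sig e2 -> e1 = e2.
Proof. destruct e1, e2; simpl; intros ->; f_equal; apply proof_irrelevance. Qed.

Section Main.
Context (H : Type -> Type) (map : forall X Z : Type, (X -> Z) -> H X -> H Z)
  (Hfun : is_functor H map)
  (Hinj : forall A X (f : A -> X), injective f -> injective (map A X f))
  (Sig : nat -> Type) (eps : forall X, HSig Sig X -> H X)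
  (epsnat : forall X Z (f : X -> Z) (u : HSig Sig X),
      eps Z (HSig_map Sig f u) = map X Z f (eps X u))
  (epssurj : forall X, surjective (eps X))
  (Y : Type) (Q : Type) (q : rawtree Sig Y -> Q)
  (Qsurj : forall x : Q, exists t, in_C Sig t /\ q t = x)
  (Qker : forall t s, in_C Sig t -> in_C Sig s -> (q t = q s <-> sim_star Sig H eps Y t s)).

Local Notation C := (in_C Sig).
Local Notation sim := (sim_star Sig H eps Y).
Local Notation simZY := (simZ Sig H eps (option Y)).

Definition rep (x : Q) : rawtree Sig Y := proj1_sig (constructive_indefinite_description _ (Qsurj x)).
Lemma rep_C x : C (rep x). Proof. unfold rep; destruct constructive_indefinite_description as [t Ht]; apply Ht. Qed.
Lemma q_rep x : q (rep x) = x. Proof. unfold rep; destruct constructive_indefinite_description as [t Ht]; apply Ht. Qed.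

Lemma sim_tnode n o (ts ss : Fin.t n -> rawtree Sig Y) :
  (forall i, sim (ts i) (ss i)) -> sim (tnode Sig n o ts) (tnode Sig n o ss).
Proof.
  intros HS k. destruct k as [|k]. apply simZ_refl.
  rewrite !cut_tnode. apply simZ_cong. intros i; apply HS.
Qed.

Lemma q_tnode n o (ts ss : Fin.t n -> rawtree Sig Y) :
  (forall i, C (ts i)) -> (forall i, C (ss i)) -> (forall i, q (ts i) = q (ss i)) ->
  q (tnode Sig n o ts) = q (tnode Sig n o ss).
Proof.
  intros Ct Cs E. apply Qker; try (apply tnode_in_C; auto).
  apply sim_tnode. intros i. apply Qker; auto.
Qed.

Definition bdef (w : HSig Sig Q) : Q :=
  match w with existT _ n (o, xs) => q (tnode Sig n o (fun i => rep (xs i))) end.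

Lemma b_hom n o (ts : Fin.t n -> rawtree Sig Y) : (forall i, C (ts i)) ->
  q (tnode Sig n o ts) = bdef (existT _ n (o, fun i => q (ts i))).
Proof.
  intros Ct. simpl. apply q_tnode; auto. intros; apply rep_C. intros i; rewrite q_rep; auto.
Qed.

Lemma b_sat : satisfies_eps_equations Sig H eps Q bdef.
Proof.
  intros V l r E v. destruct l as [n [o xs]] eqn:El; destruct r as [m [o' zs]] eqn:Er. simpl.
  apply Qker; try (apply tnode_in_C; intros; apply rep_C).
  intros k. destruct k as [|k]. apply simZ_refl. rewrite !cut_tnode.
  pose proof (simZ_ax Sig H eps (option Y) V l r (fun x => cut Sig k (rep (v x)))) as A.
  subst l r. apply A, E.
Qed.

Lemma lift_occ (w w' : HSig Sig Q) : exists (V : Type) (l r : HSig Sig V) (f : V -> Q),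
  injective f /\ HSig_map Sig f l = w /\ HSig_map Sig f r = w' /\
  (forall v, occurs Sig v l \/ occurs Sig v r).
Proof.
  destruct w as [n [o xs]]; destruct w' as [m [o' zs]].
  set (P := fun x => (exists i, xs i = x) \/ (exists i, zs i = x)).
  exists {x | P x}.
  exists (existT (fun n0 => (Sig n0 * (Fin.t n0 -> {x | P x}))%type) n
              (o, fun i => exist P (xs i) (or_introl (ex_intro _ i eq_refl)))).
  exists (existT (fun n0 => (Sig n0 * (Fin.t n0 -> {x | P x}))%type) m
              (o', fun i => exist P (zs i) (or_intror (ex_intro _ i eq_refl)))).
  exists (@proj1_sig _ P). split. intros e1 e2; apply sig_inj.
  split. reflexivity. split. reflexivity.
  intros [v Pv]. destruct Pv as [[i Hi]|[i Hi]]; [left|right]; exists i; apply sig_inj; simpl; auto.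
Qed.

Lemma b_fiber w w' : eps Q w = eps Q w' -> bdef w = bdef w'.
Proof.
  intros E. destruct (lift_occ w w') as [V [l [r [f [fi [Hl [Hr Ho]]]]]]].
  assert (EQ : eps_equation Sig H eps V l r).
  { split; auto. apply (Hinj _ _ f fi). rewrite <- !epsnat, Hl, Hr. exact E. }
  pose proof (b_sat _ l r EQ f) as B. rewrite Hl, Hr in B. exact B.
Qed.

Definition adef (u : H Q) : Q := bdef (proj1_sig (constructive_indefinite_description _ (epssurj Q u))).
Lemma a_ok u : bdef u = adef (eps Q u).
Proof.
  unfold adef. destruct constructive_indefinite_description as [w Hw]. simpl.
  apply b_fiber. auto.
Qed.

Lemma tleaf_C y : C (@tleaf Sig Y y).
Proof.
  split. split. simpl; discriminate.
  intros [|j p]; simpl; auto.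
  exists [[]]. intros [|j p] y' Hp; simpl in *; auto; discriminate.
Qed.

Lemma sim_leaf y t : C t -> sim (@tleaf Sig Y y) t -> t = @tleaf Sig Y y.
Proof.
  intros [Wt _] S. specialize (S 1). apply (simZ_leaf H map Sig eps epsnat) in S. unfold cut in S; simpl in S.
  destruct (t []) as [[y'|[n o]]|] eqn:E; try discriminate. injection S as ->.
  apply functional_extensionality; intros [|j p]; simpl; auto.
  assert (t [j] = None). { destruct Wt as [_ W]. specialize (W []). rewrite E in W. apply W. }
  apply (wf_none_ext _ _ t Wt [j] p H0).
Qed.

Lemma q_leaf y t : C t -> q t = q (@tleaf Sig Y y) -> t = @tleaf Sig Y y.
Proof.
  intros Ct E. apply sim_leaf; auto. apply Qker; auto using tleaf_C.
Qed.

Lemma pair_K (d1 d2 : rawtree Sig Y) : exists K0, forall K, K0 <= K ->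
  simZY (cut Sig K d1) (cut Sig K d2) -> sim d1 d2.
Proof.
  destruct (classic (sim d1 d2)) as [S|S]. exists 0; auto.
  apply not_all_ex_not in S. destruct S as [k Hk]. exists k. intros K HK SK.
  exfalso; apply Hk. eapply (cut_mono H Sig eps); eauto.
Qed.

Lemma list_K (l : list (rawtree Sig Y * rawtree Sig Y)) : exists K0, forall K, K0 <= K ->
  forall pr, In pr l -> simZY (cut Sig K (fst pr)) (cut Sig K (snd pr)) -> sim (fst pr) (snd pr).
Proof.
  induction l as [|[d1 d2] l [K1 IH]]. exists 0; intros K _ pr [].
  destruct (pair_K d1 d2) as [K2 H2]. exists (K1 + K2). intros K HK pr [E|E].
  - subst pr; simpl. apply H2; lia.
  - apply IH; auto; lia.
Qed.

Definition pi (u : ftree Sig (option Y)) : ftree Sig (option Y) -> Prop := simZY u.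

Lemma pi_inv u v : simZY u v -> pi u = pi v.
Proof.
  intros S. unfold pi. apply functional_extensionality; intros w. apply propositional_extensionality.
  split; intros S'. eapply simZ_trans; [apply simZ_sym, S| exact S']. eapply simZ_trans; eauto.
Qed.

Lemma stepA t t' n o m o' : C t -> C t' -> sim t t' ->
  t [] = Some (inr (existT _ n o)) -> t' [] = Some (inr (existT _ m o')) ->
  eps Q (existT _ n (o, fun i => q (child Sig Y t (proj1_sig (Fin.to_nat i))))) =
  eps Q (existT _ m (o', fun i => q (child Sig Y t' (proj1_sig (Fin.to_nat i))))).
Proof.
  intros Ct Ct' Sm Ht Ht'.
  set (ds := List.map (child Sig Y t) (seq 0 n) ++ List.map (child Sig Y t') (seq 0 m)).
  assert (dsC : forall d, In d ds -> C d).
  { intros d Hd. apply in_app_or in Hd. destruct Hd as [Hd|Hd]; apply in_map_iff in Hd;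
      destruct Hd as [i [<- Hi]]; apply in_seq in Hi; eapply child_in_C; eauto; lia. }
  destruct (list_K (list_prod ds ds)) as [K HK].
  assert (KP : forall d1 d2, In d1 ds -> In d2 ds -> simZY (cut Sig K d1) (cut Sig K d2) -> sim d1 d2).
  { intros d1 d2 H1 H2 S12. apply (HK K (le_n _) (d1, d2)); auto. apply in_prod; auto. }
  pose proof (Sm (S K)) as SK.
  rewrite (tnode_child _ _ t n o (proj1 Ct) Ht), (tnode_child _ _ t' m o' (proj1 Ct') Ht') in SK.
  rewrite !cut_tnode in SK.
  pose proof (simZ_shape H map Sig eps epsnat _ pi pi_inv _ _ SK) as R. simpl in R.
  set (P := fun x : Q => exists d, In d ds /\ q d = x).
  set (pick := fun e : {x | P x} => proj1_sig (constructive_indefinite_description _ (proj2_sig e))).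
  assert (pickP : forall e, In (pick e) ds /\ q (pick e) = proj1_sig e).
  { intros e. unfold pick. destruct constructive_indefinite_description; auto. }
  set (g := fun e : {x | P x} => pi (cut Sig K (pick e))).
  assert (ginj : injective g).
  { intros e1 e2 E. apply sig_inj. destruct (pickP e1) as [I1 Q1]. destruct (pickP e2) as [I2 Q2].
    rewrite <- Q1, <- Q2. apply Qker; auto. apply KP; auto.
    unfold g in E. assert (pi (cut Sig K (pick e1)) (cut Sig K (pick e1))) by apply simZ_refl.
    rewrite E in H0. apply simZ_sym; exact H0. }
  assert (gval : forall d (Hd : In d ds), g (exist P (q d) (ex_intro _ d (conj Hd eq_refl))) = pi (cut Sig K d)).
  { intros d Hd. unfold g. apply pi_inv.
    set (e := exist P (q d) (ex_intro _ d (conj Hd eq_refl))). destruct (pickP e) as [I1 Q1].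
    simpl in Q1. apply Qker in Q1; auto. }
  assert (In1 : forall i : Fin.t n, In (child Sig Y t (proj1_sig (Fin.to_nat i))) ds).
  { intros i. apply in_or_app; left. apply in_map, in_seq. destruct (Fin.to_nat i) as [j hj]; simpl; lia. }
  assert (In2 : forall i : Fin.t m, In (child Sig Y t' (proj1_sig (Fin.to_nat i))) ds).
  { intros i. apply in_or_app; right. apply in_map, in_seq. destruct (Fin.to_nat i) as [j hj]; simpl; lia. }
  set (al := existT (fun n0 => (Sig n0 * (Fin.t n0 -> {x | P x}))%type) n
       (o, fun i => exist P _ (ex_intro _ _ (conj (In1 i) eq_refl)))).
  set (be := existT (fun n0 => (Sig n0 * (Fin.t n0 -> {x | P x}))%type) m
       (o', fun i => exist P _ (ex_intro _ _ (conj (In2 i) eq_refl)))).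
  assert (E1 : eps {x | P x} al = eps {x | P x} be).
  { apply (Hinj _ _ g ginj). rewrite <- !epsnat. unfold al, be; simpl.
    replace (fun i => g (exist P _ (ex_intro _ _ (conj (In1 i) eq_refl))))
      with (fun i : Fin.t n => pi (cut Sig K (child Sig Y t (proj1_sig (Fin.to_nat i))))).
    replace (fun i => g (exist P _ (ex_intro _ _ (conj (In2 i) eq_refl))))
      with (fun i : Fin.t m => pi (cut Sig K (child Sig Y t' (proj1_sig (Fin.to_nat i))))).
    exact R.
    all: apply functional_extensionality; intros i; rewrite gval; reflexivity. }
  apply (f_equal (map _ Q (@proj1_sig _ P))) in E1. rewrite <- !epsnat in E1. exact E1.
Qed.
Context (a : H Q -> Q) (Ha : forall u, bdef u = a (eps Q u)).

Lemma map_comp {A B' D : Type} (g : A -> B') (k : B' -> D) v :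
  map A D (fun z => k (g z)) v = map B' D k (map A B' g v).
Proof. apply (proj2 Hfun). Qed.

Fixpoint trp {X : Type} (uX : X -> HSig Sig X) (p : list nat) (x : X) : option (label Sig Y) :=
  match uX x with
  | existT _ n (o, xs) =>
      match p with
      | [] => Some (inr (existT _ n o))
      | i :: p' => match lt_dec i n with
                   | left h => trp uX p' (xs (Fin.of_nat_lt h))
                   | right _ => None
                   end
      end
  end.

Lemma trp_unfold {X : Type} (uX : X -> HSig Sig X) x :
  (fun p => trp uX p x) = match uX x with existT _ n (o, xs) =>
     tnode Sig n o (fun i => fun p => trp uX p (xs i)) end.
Proof.
  apply functional_extensionality; intros p. destruct p as [|j p]; simpl;
  destruct (uX x) as [n [o xs]]; simpl; auto.
Qed.

Lemma trp_nil {X : Type} (uX : X -> HSig Sig X) x : trp uX [] x <> None.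
Proof. simpl. destruct (uX x) as [n [o xs]]; discriminate. Qed.

Lemma trp_noleaf {X : Type} (uX : X -> HSig Sig X) p x y : trp uX p x <> Some (inl y).
Proof.
  revert x; induction p as [|j p IH]; intros x; simpl; destruct (uX x) as [n [o xs]]; try discriminate.
  destruct (lt_dec j n); auto; discriminate.
Qed.

Lemma trp_C {X : Type} (uX : X -> HSig Sig X) x : C (fun p => trp uX p x).
Proof.
  split. split. apply trp_nil.
  - intros p. revert x. induction p as [|j p IH]; intros x.
    + simpl. destruct (uX x) as [n [o xs]]. intros i. simpl.
      destruct (lt_dec i n) as [h|h]. split; auto. intros _; apply trp_nil.
      split; intros; [exfalso; auto| contradiction].
    + simpl. destruct (uX x) as [n [o xs]]. destruct (lt_dec j n) as [h|h]. apply IH.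
      simpl. auto.
  - exists []. intros p y Hp. exfalso; eapply trp_noleaf; eauto.
Qed.

Lemma Q_corec : corecursive H map Q a.
Proof.
  intros X e.
  set (uX := fun x => proj1_sig (constructive_indefinite_description _ (epssurj X (e x)))).
  assert (Hu : forall x, eps X (uX x) = e x).
  { intros x; unfold uX; destruct constructive_indefinite_description; auto. }
  set (tr := fun x => fun p => trp uX p x).
  assert (trC : forall x, C (tr x)) by (intros; apply trp_C).
  assert (trU : forall x, tr x = match uX x with existT _ n (o, xs) =>
     tnode Sig n o (fun i => tr (xs i)) end) by (intros; apply trp_unfold).
  exists (fun x => q (tr x)). split.
  - intros x. rewrite <- Hu, <- epsnat, <- Ha. rewrite (trU x).
    destruct (uX x) as [n [o xs]]. simpl HSig_map. apply b_hom. intros; apply trC.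
  - intros s' Hs'.
    set (t' := fun z => rep (s' z)).
    assert (Key : forall z, match uX z with existT _ n (o, xs) =>
                 q (t' z) = q (tnode Sig n o (fun i => t' (xs i))) end).
    { intros z. unfold t'. rewrite q_rep, Hs', <- Hu, <- epsnat, <- Ha.
      destruct (uX z) as [n [o xs]]. simpl HSig_map. rewrite b_hom by (intros; apply rep_C).
      f_equal. f_equal. f_equal. apply functional_extensionality; intros i. rewrite q_rep; auto. }
    assert (Cl : forall k z, simZY (cut Sig k (t' z)) (cut Sig k (tr z))).
    { induction k as [|k IH]; intros z. apply simZ_refl.
      specialize (Key z). rewrite (trU z). destruct (uX z) as [n [o xs]].
      apply Qker in Key; [|apply rep_C| apply tnode_in_C; intros; apply rep_C].
      eapply simZ_trans. apply (Key (S k)). rewrite !cut_tnode. apply simZ_cong. intros i; apply IH. }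
    intros x. rewrite <- (q_rep (s' x)). apply Qker. apply rep_C. apply trC. intros k; apply Cl.
Qed.

Definition Pk (k : nat) (x : Q) : Prop := exists t, C t /\ bounded Sig Y k t /\ q t = x.

Definition osq (t : rawtree Sig Y) n (o : Sig n) : HSig Sig Q :=
  existT _ n (o, fun i => q (child Sig Y t (proj1_sig (Fin.to_nat i)))).

Definition nodeinfo (P : Q -> Prop) (x : Q) (w : HSig Sig (sig P)) : Prop :=
  exists t n o, C t /\ q t = x /\ t [] = Some (inr (existT _ n o)) /\
    HSig_map Sig (@proj1_sig _ P) w = osq t n o.

Lemma leaf_shape t y : C t -> t [] = Some (inl y) -> t = @tleaf Sig Y y.
Proof.
  intros [Wt _] E. apply functional_extensionality; intros [|j p]; simpl; auto.
  assert (t [j] = None). { destruct Wt as [_ W]. specialize (W []). rewrite E in W. apply W. }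
  apply (wf_none_ext _ _ t Wt [j] p H0).
Qed.

Lemma a_os t n o : C t -> t [] = Some (inr (existT _ n o)) -> a (eps Q (osq t n o)) = q t.
Proof.
  intros Ct Ht. rewrite <- Ha. unfold osq. rewrite <- b_hom.
  rewrite <- (tnode_child _ _ t n o (proj1 Ct) Ht); auto.
  intros i. eapply child_in_C; eauto. exact (proj2_sig (Fin.to_nat i)).
Qed.

Lemma NI1 P x w : nodeinfo P x w -> a (map _ Q (@proj1_sig _ P) (eps _ w)) = x.
Proof.
  intros [t [n [o [Ct [Qt [Ht Hw]]]]]]. rewrite <- (epsnat _ _ (@proj1_sig _ P) w), Hw, a_os; auto.
Qed.

Lemma NI2 P x w t n o : nodeinfo P x w -> C t -> q t = x -> t [] = Some (inr (existT _ n o)) ->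
  map _ Q (@proj1_sig _ P) (eps _ w) = eps Q (osq t n o).
Proof.
  intros [t1 [n1 [o1 [Ct1 [Qt1 [Ht1 Hw]]]]]] Ct Qt Ht. rewrite <- (epsnat _ _ (@proj1_sig _ P) w), Hw.
  apply stepA; auto. apply Qker; auto. congruence.
Qed.

Lemma liftP (P : Q -> Prop) n (o : Sig n) xs : (forall i, P (xs i)) ->
  exists w : HSig Sig (sig P), HSig_map Sig (@proj1_sig _ P) w = existT _ n (o, xs).
Proof.
  intros HP. exists (existT _ n (o, fun i => exist P (xs i) (HP i))). reflexivity.
Qed.

Lemma Lnode k x : Pk (S k) x -> ~ (exists y, x = q (@tleaf Sig Y y)) ->
  exists w, nodeinfo (Pk k) x w.
Proof.
  intros [t [Ct [Bt Qt]]] NL.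
  destruct (t []) as [[y|[n o]]|] eqn:Ht.
  - exfalso. apply NL. exists y. rewrite <- Qt, (leaf_shape t y Ct Ht). reflexivity.
  - destruct (liftP (Pk k) n o (fun i => q (child Sig Y t (proj1_sig (Fin.to_nat i))))) as [w Hw].
    { intros i. exists (child Sig Y t (proj1_sig (Fin.to_nat i))). split.
      eapply child_in_C; eauto. exact (proj2_sig (Fin.to_nat i)). split; auto.
      apply child_bounded; auto. }
    exists w, t, n, o. auto.
  - exfalso. apply (proj1 (proj1 Ct)). exact Ht.
Qed.

Lemma P0_node x : Pk 0 x -> exists w, nodeinfo (Pk 0) x w.
Proof.
  intros [t [Ct [Bt Qt]]].
  destruct (t []) as [[y|[n o]]|] eqn:Ht.
  - exfalso. apply Bt in Ht. simpl in Ht. lia.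
  - destruct (liftP (Pk 0) n o (fun i => q (child Sig Y t (proj1_sig (Fin.to_nat i))))) as [w Hw].
    { intros i. exists (child Sig Y t (proj1_sig (Fin.to_nat i))). split.
      eapply child_in_C; eauto. exact (proj2_sig (Fin.to_nat i)). split; auto.
      intros p y Hp. apply Bt in Hp. simpl in Hp. lia. }
    exists w, t, n, o. auto.
  - exfalso. apply (proj1 (proj1 Ct)). exact Ht.
Qed.

Lemma Pk_mono k k' x : k <= k' -> Pk k x -> Pk k' x.
Proof.
  intros Hk [t [Ct [Bt Qt]]]. exists t. split; auto. split; auto.
  intros p y Hp. apply Bt in Hp. lia.
Qed.

Lemma Pk_all x : exists k, Pk k x.
Proof.
  destruct (Qsurj x) as [t [Ct Qt]]. destruct (in_C_bounded _ _ t Ct) as [k Hk].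
  exists k, t; auto.
Qed.

Lemma leaf_not_P0 y : ~ Pk 0 (q (@tleaf Sig Y y)).
Proof.
  intros [t [Ct [Bt Qt]]]. apply q_leaf in Qt; auto. subst t.
  specialize (Bt [] y eq_refl). simpl in Bt. lia.
Qed.

Lemma leaf_inj y y' : q (@tleaf Sig Y y) = q (@tleaf Sig Y y') -> y = y'.
Proof.
  intros E. apply q_leaf in E; [|apply tleaf_C]. apply (f_equal (fun t => t [])) in E.
  simpl in E. congruence.
Qed.

Section Free.
Context (B : Type) (b' : H B -> B) (Bcor : corecursive H map B b') (f : Y -> B) (b0 : B).

Definition Q0 := sig (Pk 0).
Definition w0 (z : Q0) : HSig Sig Q0 :=
  proj1_sig (constructive_indefinite_description _ (P0_node _ (proj2_sig z))).
Lemma w0_ok z : nodeinfo (Pk 0) (proj1_sig z) (w0 z).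
Proof. unfold w0. destruct constructive_indefinite_description; auto. Qed.
Definition e0 (z : Q0) : H Q0 := eps Q0 (w0 z).

Definition s0 : Q0 -> B := proj1_sig (constructive_indefinite_description _ (Bcor Q0 e0)).
Lemma s0_sol z : s0 z = b' (map _ B s0 (e0 z)).
Proof. unfold s0. destruct constructive_indefinite_description as [s Hs]. simpl. apply (proj1 Hs). Qed.
Lemma s0_uniq (s' : Q0 -> B) : (forall z, s' z = b' (map _ B s' (e0 z))) -> forall z, s' z = s0 z.
Proof. unfold s0. destruct constructive_indefinite_description as [s Hs]. simpl. apply (proj2 Hs). Qed.

Fixpoint hk (k : nat) (x : Q) : B :=
  match excluded_middle_informative (Pk 0 x) with
  | left h => s0 (exist _ x h)
  | right _ =>
    match k with
    | 0 => b0
    | S k' =>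
      match excluded_middle_informative (exists y, x = q (@tleaf Sig Y y)) with
      | left hy => f (proj1_sig (constructive_indefinite_description _ hy))
      | right _ =>
        match excluded_middle_informative (exists w, nodeinfo (Pk k') x w) with
        | left hw => b' (map _ B (fun z => hk k' (proj1_sig z))
                          (eps _ (proj1_sig (constructive_indefinite_description _ hw))))
        | right _ => b0
        end
      end
    end
  end.

Lemma hk_P0 k x (h : Pk 0 x) : hk k x = s0 (exist _ x h).
Proof.
  destruct k; simpl; destruct (excluded_middle_informative (Pk 0 x)) as [h'|h'];
    try (f_equal; apply sig_inj; reflexivity); contradiction.
Qed.

Lemma hk_leaf k y : hk (S k) (q (@tleaf Sig Y y)) = f y.
Proof.
  simpl. destruct (excluded_middle_informative (Pk 0 _)) as [h|h].
  exfalso; eapply leaf_not_P0; eauto.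
  destruct (excluded_middle_informative _) as [hy|hy].
  - destruct constructive_indefinite_description as [y' Hy']. simpl. f_equal.
    symmetry; apply leaf_inj; auto.
  - exfalso; apply hy; eauto.
Qed.

Lemma hk_node k x : ~ Pk 0 x -> ~ (exists y, x = q (@tleaf Sig Y y)) ->
  forall w, nodeinfo (Pk k) x w ->
  hk (S k) x = b' (map _ B (hk k) (map _ Q (@proj1_sig _ (Pk k)) (eps _ w))).
Proof.
  intros N0 NL w Hw. simpl.
  destruct (excluded_middle_informative (Pk 0 x)) as [h|h]; [contradiction|].
  destruct (excluded_middle_informative (exists y, x = q (@tleaf Sig Y y))) as [hy|hy]; [contradiction|].
  destruct (excluded_middle_informative (exists w, nodeinfo (Pk k) x w)) as [hw|hw].
  - destruct constructive_indefinite_description as [w' Hw']. simpl.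
    rewrite map_comp. f_equal. f_equal.
    assert (Hw2 := Hw'). destruct Hw2 as [t [n [o [Ct [Qt [Ht _]]]]]].
    rewrite (NI2 _ x w t n o Hw Ct Qt Ht).
    apply (NI2 _ x w' t n o Hw' Ct Qt Ht).
  - exfalso; eauto.
Qed.

Lemma map_ext_P (P : Q -> Prop) (g1 g2 : Q -> B) (v : H (sig P)) :
  (forall z, P z -> g1 z = g2 z) ->
  map _ B g1 (map _ Q (@proj1_sig _ P) v) = map _ B g2 (map _ Q (@proj1_sig _ P) v).
Proof.
  intros E. rewrite <- !map_comp. f_equal. apply functional_extensionality; intros [z hz]; simpl; auto.
Qed.

Lemma hk_stab k x : Pk k x -> hk k x = hk (S k) x.
Proof.
  revert x; induction k as [|k IH]; intros x Px.
  - rewrite !(hk_P0 _ x Px). reflexivity.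
  - destruct (classic (Pk 0 x)) as [P0|N0]. rewrite !(hk_P0 _ x P0); reflexivity.
    destruct (classic (exists y, x = q (@tleaf Sig Y y))) as [[y ->]|NL].
    rewrite !hk_leaf; reflexivity.
    destruct (Lnode k x Px NL) as [w1 Hw1].
    destruct (Lnode (S k) x (Pk_mono _ _ _ (le_S _ _ (le_n _)) Px) NL) as [w2 Hw2].
    rewrite (hk_node k x N0 NL w1 Hw1), (hk_node (S k) x N0 NL w2 Hw2).
    f_equal. rewrite (map_ext_P _ (hk k) (hk (S k))) by (intros; apply IH; auto).
    f_equal. destruct Hw1 as [t [n [o [Ct [Qt [Ht Hm]]]]]].
    rewrite (NI2 _ x w2 t n o Hw2 Ct Qt Ht). rewrite <- epsnat, Hm. reflexivity.
Qed.

Lemma hk_le k k' x : k <= k' -> Pk k x -> hk k x = hk k' x.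
Proof.
  intros Hk Px. induction Hk as [|k' Hk IH]. reflexivity.
  rewrite IH. apply hk_stab. eapply Pk_mono; eauto.
Qed.

Definition Kx (x : Q) : nat := proj1_sig (constructive_indefinite_description _ (Pk_all x)).
Lemma Kx_ok x : Pk (Kx x) x.
Proof. unfold Kx. destruct constructive_indefinite_description; auto. Qed.

Definition hdef (x : Q) : B := hk (Kx x) x.

Lemma hdef_P k x : Pk k x -> hdef x = hk k x.
Proof.
  intros Px. unfold hdef. destruct (le_ge_dec k (Kx x)) as [l|l].
  symmetry; apply hk_le; auto. apply hk_le; auto. apply Kx_ok.
Qed.

Lemma hdef_eta y : hdef (q (@tleaf Sig Y y)) = f y.
Proof.
  rewrite (hdef_P 1). apply hk_leaf.
  exists (@tleaf Sig Y y). split. apply tleaf_C. split; auto.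
  intros [|j p] y' Hp; simpl in *; [lia|discriminate].
Qed.

Lemma hdef_morph : alg_morphism H map Q a B b' hdef.
Proof.
  intros u. destruct (epssurj Q u) as [w <-]. destruct w as [n [o xs]].
  set (ts := fun i => rep (xs i)).
  set (t := tnode Sig n o ts).
  assert (Ct : C t) by (apply tnode_in_C; intros; apply rep_C).
  assert (Qt : a (eps Q (existT _ n (o, xs))) = q t).
  { rewrite <- Ha. unfold t. rewrite b_hom by (intros; apply rep_C). f_equal. f_equal. f_equal.
    apply functional_extensionality; intros i; unfold ts; rewrite q_rep; auto. }
  assert (Ht : t [] = Some (inr (existT _ n o))) by reflexivity.
  assert (Eos : eps Q (osq t n o) = eps Q (existT _ n (o, xs))).
  { unfold osq. f_equal. f_equal. f_equal. apply functional_extensionality; intros i.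
    unfold t. rewrite child_tnode. unfold ts. apply q_rep. }
  rewrite Qt. destruct (in_C_bounded _ _ t Ct) as [K BK].
  assert (PK : Pk (S K) (q t)).
  { exists t. split; auto. split; auto. intros p y Hp. apply BK in Hp. lia. }
  rewrite (hdef_P _ _ PK).
  destruct (classic (Pk 0 (q t))) as [P0|N0].
  - rewrite (hk_P0 _ _ P0), s0_sol. unfold e0. f_equal.
    pose proof (w0_ok (exist _ (q t) P0)) as Hw. simpl in Hw.
    rewrite <- (NI2 _ _ _ t n o Hw Ct eq_refl Ht) in Eos. rewrite <- Eos.
    rewrite <- map_comp. f_equal. apply functional_extensionality; intros [z hz]. simpl.
    rewrite (hdef_P 0 z hz), (hk_P0 0 z hz). reflexivity.
  - destruct (classic (exists y, q t = q (@tleaf Sig Y y))) as [[y Ey]|NL].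
    { apply q_leaf in Ey; auto. rewrite Ey in Ht. discriminate. }
    destruct (Lnode K (q t) PK NL) as [w1 Hw1].
    rewrite (hk_node K _ N0 NL w1 Hw1). f_equal.
    rewrite <- Eos, <- (NI2 _ _ _ t n o Hw1 Ct eq_refl Ht).
    apply map_ext_P. intros z hz. symmetry; apply hdef_P; auto.
Qed.

Lemma hdef_uniq (h' : Q -> B) : alg_morphism H map Q a B b' h' ->
  (forall y, h' (q (@tleaf Sig Y y)) = f y) -> forall x, h' x = hdef x.
Proof.
  intros Hm He.
  assert (U0 : forall z : Q0, h' (proj1_sig z) = s0 z).
  { apply s0_uniq. intros z. pose proof (w0_ok z) as Hw.
    rewrite <- (NI1 _ _ _ Hw) at 1. rewrite Hm. unfold e0. rewrite <- map_comp. reflexivity. }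
  assert (Uk : forall k x, Pk k x -> h' x = hk k x).
  { induction k as [|k IH]; intros x Px.
    - rewrite (hk_P0 _ _ Px). apply (U0 (exist _ x Px)).
    - destruct (classic (Pk 0 x)) as [P0|N0]. rewrite (hk_P0 _ _ P0). apply (U0 (exist _ x P0)).
      destruct (classic (exists y, x = q (@tleaf Sig Y y))) as [[y ->]|NL].
      rewrite hk_leaf; auto.
      destruct (Lnode k x Px NL) as [w1 Hw1].
      rewrite (hk_node k x N0 NL w1 Hw1). rewrite <- (NI1 _ _ _ Hw1) at 1. rewrite Hm.
      f_equal. apply map_ext_P. auto. }
  intros x. unfold hdef. apply Uk, Kx_ok.
Qed.
End Free.

Lemma inhB (B : Type) (b' : H B -> B) (Bcor : corecursive H map B b') (f : Y -> B) (x : Q) : inhabited B.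
Proof.
  destruct (classic (Pk 0 x)) as [P0|N0].
  - constructor. exact (s0 B b' Bcor (exist _ x P0)).
  - destruct (Qsurj x) as [t [Ct Qt]].
    assert (E : exists p y, t p = Some (inl y)).
    { apply NNPP; intros NE. apply N0. exists t. split; auto. split; auto.
      intros p y Hp. exfalso; apply NE; eauto. }
    destruct E as [p [y _]]. constructor. exact (f y).
Qed.
End Main.

Lemma sim_congr (Sig : nat -> Type) (H : Type -> Type) (eps : forall X, HSig Sig X -> H X) (Y : Type) :
  congruence_on_C Sig Y (sim_star Sig H eps Y).
Proof.
  split. intros t _ k; apply simZ_refl.
  split. intros t s _ _ S k; apply simZ_sym, S.
  split. intros t s w _ _ _ S1 S2 k; eapply simZ_trans; eauto.
  intros n o ts ss Hts k. destruct k as [|k]. apply simZ_refl.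
  rewrite !cut_tnode. apply simZ_cong. intros i; apply (proj2 (proj2 (Hts i))).
Qed.

Theorem mainTheorem9
  (H : Type -> Type) (map : forall X Z : Type, (X -> Z) -> H X -> H Z)
  (Hfun : is_functor H map) (Hfin : finitary H map) (Hstd : standard H map)
  (Sig : nat -> Type) (eps : forall X, HSig Sig X -> H X)
  (Hpres : presentation Sig H map eps)
  (Y : Type) :
  congruence_on_C Sig Y (sim_star Sig H eps Y) /\
  forall (Q : Type) (q : rawtree Sig Y -> Q),
    (* (Q, q) is the quotient C_Sigma Y / ~*_Y *)
    (forall x : Q, exists t, in_C Sig t /\ q t = x) ->
    (forall t s, in_C Sig t -> in_C Sig s -> (q t = q s <-> sim_star Sig H eps Y t s)) ->
    exists b : HSig Sig Q -> Q,
      (* b is the quotient Sigma-algebra structure: q is a homomorphism *)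
      (forall n (o : Sig n) (ts : Fin.t n -> rawtree Sig Y),
         (forall i, in_C Sig (ts i)) ->
         q (tnode Sig n o ts) = b (existT _ n (o, fun i => q (ts i)))) /\
      satisfies_eps_equations Sig H eps Q b /\
      (exists a : H Q -> Q, forall u, b u = a (eps Q u)) /\
      (forall a : H Q -> Q, (forall u, b u = a (eps Q u)) ->
         free_corecursive H map Q a Y (fun y => q (tleaf Sig y))).
Proof.
  destruct Hstd as [Hinj _]. destruct Hpres as [epsnat epssurj].
  split. apply sim_congr.
  intros Q q Qs Qk. exists (bdef Sig Y Q q Qs).
  split. intros n o ts Hts. eapply b_hom; eauto.
  split. eapply b_sat; eauto.
  split. exists (adef H Sig eps epssurj Y Q q Qs). intros u. eapply a_ok; eauto.
  intros a Ha. split. eapply Q_corec; eauto.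
  intros B b' Bcor f.
  destruct (classic (inhabited B)) as [[b0]|NB].
  - exists (hdef H map Sig eps Y Q q Qs B b' Bcor f b0). split. split.
    + eapply hdef_morph; eauto.
    + intros y. eapply hdef_eta; eauto.
    + intros h' Hm He x. eapply hdef_uniq; eauto.
  - assert (IB : forall x : Q, inhabited B) by (intros x; eapply inhB; eauto).
    exists (fun x => False_rect B (NB (IB x))). split. split.
    + intros u. exfalso. apply NB, IB, (a u).
    + intros y. exfalso. apply NB, IB, (q (tleaf Sig y)).
    + intros h' _ _ x. exfalso. apply NB, IB, x.
Qed.
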